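(* Let $k\ge2$ be an integer and, for a positive integer $A$, let $f^\infty_A$ be the infinite word $(\mathsf{1}^A\mathsf{2}^A\cdots\mathsf{k}^A)(\mathsf{1}^A\mathsf{2}^A\cdots\mathsf{k}^A)\cdots$ over $[k]$. Let $A,B$ be positive integers with $kA\le B$, and let $s=(w_1',w_2')$ be a (finite) common subsequence between $f^\infty_A$ and $f^\infty_B$. Then \[\operatorname{span} s\ \ge\ \left(k+1-\frac{kA}{B}\right)\operatorname{len} s-2(A+B).\]
   Context: $\alpha^A$ denotes the letter $\alpha$ repeated $A$ times. Symbols in words are treated as distinguishable positions. A common subsequence of words $w_1,w_2$ is a pair $s=(w_1',w_2')$ of subsequences of $w_1$ and $w_2$ respectively that are equal as words; $\operatorname{len} s$ is their common length. The span $\operatorname{span}_w w'$ of a subsequence $w'$ of $w$ is the length of the shortest block of consecutive symbols of $w$ containing $w'$, and $\operatorname{span} s=\operatorname{span}_{w_1}w_1'+\operatorname{span}_{w_2}w_2'$. *)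

(* Defs.v *)
From mathcomp Require Import all_boot all_order all_algebra.
Set Implicit Arguments. Unset Strict Implicit. Unset Printing Implicit Defensive.

(* Letter at position i (0-indexed) of the infinite word
   f^oo_A = (1^A 2^A ... k^A)(1^A 2^A ... k^A)... over [k] = {1,...,k}. *)
Definition fword (k A i : nat) : nat := (i %/ A) %% k + 1.

(* A finite subsequence of an infinite word is given by its (strictly
   increasing) list of positions. *)
Definition spanw (s : seq nat) : nat :=
  if s is x :: _ then last x s - x + 1 else 0.

Definition common_subseq (k A B : nat) (s1 s2 : seq nat) : Prop :=
  [/\ sorted ltn s1, sorted ltn s2, size s1 = size s2 &
      forall i, i < size s1 -> fword k A (nth 0 s1 i) = fword k B (nth 0 s2 i)].

(* Main.v *)
Require Import Defs.
From mathcomp Require Import all_boot all_order all_algebra zify ring lra.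
Import Order.TTheory GRing.Theory Num.Theory.
Lemma t1 k A B q r r' Q R R' : 2 <= k -> 0 < A -> k*A <= B -> r < r' -> R < R' -> r' < A -> R' < B ->
 B*((q*A+r') + (Q*B+R')) + B*(k-1)*r' + k*A*R + k*A >= B*((q*A+r)+(Q*B+R)) + (k+1)*B + B*(k-1)*r + k*A*R'.
Proof. move=> *. nia. Qed.
Lemma t2 k A B q q' r r' Q R R' : 2 <= k -> 0 < A -> k*A <= B -> q + k <= q' -> R < R' -> r' < A -> r < A -> R' < B ->
 B*((q'*A+r') + (Q*B+R')) + B*(k-1)*r' + k*A*R + k*A >= B*((q*A+r)+(Q*B+R)) + (k+1)*B + B*(k-1)*r + k*A*R'.
Proof. case: k => // k1 hk hA hB hq hR hr' hr hR'.
rewrite subSS subn0.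
have h1 : B*((q+k1.+1)*A) <= B*(q'*A) by rewrite leq_mul2l leq_mul2r hq !orbT.
have h2 : B*(k1.+1*(r+1)) <= B*(k1.+1*A) by rewrite leq_mul2l leq_mul2l addn1 hr !orbT.
have h3 : (B-k1.+1*A)*(R+1) <= (B-k1.+1*A)*R' by rewrite leq_mul2l addn1 hR orbT.
have := subnKC hB; move: (B - k1.+1*A) h3 => D h3 eB; subst B.
rewrite !(mulnDl, mulnDr, mulSn, mulnS, mulnA) in h1 h2 h3 *.
lia.
Qed.
Lemma t3 k A B q q' r r' Q Q' R R' : 2 <= k -> 0 < A -> k*A <= B -> q*A+r < q'*A+r' -> Q < Q' -> r' < A -> r < A -> R' < B -> R < B ->
 B*((q'*A+r') + (Q'*B+R')) + B*(k-1)*r' + k*A*R + k*A >= B*((q*A+r)+(Q*B+R)) + (k+1)*B + B*(k-1)*r + k*A*R'.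
Proof. case: k => // k1 hk hA hB hx hQ hr' hr hR' hR.
rewrite subSS subn0.
have h1 : B*(q*A+r+1) <= B*(q'*A+r') by rewrite leq_mul2l addn1 hx orbT.
have h2 : B*((Q+1)*B) <= B*(Q'*B) by rewrite leq_mul2l leq_mul2r addn1 hQ !orbT.
have h3 : (B-k1.+1*A)*(R+1) <= (B-k1.+1*A)*B by rewrite leq_mul2l addn1 hR orbT.
have h4 : B*(k1*(r+1)) <= B*(k1*A) by rewrite leq_mul2l leq_mul2l addn1 hr !orbT.
have := subnKC hB; move: (B - k1.+1*A) h3 => D h3 eB; subst B.
rewrite !(mulnDl, mulnDr, mulSn, mulnS, mulnA) in h1 h2 h3 h4 *.
lia.
Qed.
Lemma step k A B x y x' y' : 2 <= k -> 0 < A -> k*A <= B -> x < x' -> y < y' ->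
  fword k A x = fword k B y -> fword k A x' = fword k B y' ->
  B*(x'+y') + B*(k-1)*(x'%%A) + k*A*(y%%B) + k*A >= B*(x+y) + (k+1)*B + B*(k-1)*(x%%A) + k*A*(y'%%B).
Proof.
move=> hk hA hB hx hy; rewrite /fword => /addIn e1 /addIn e2.
have hB0 : 0 < B by apply: leq_trans hB; rewrite muln_gt0 hA; lia.
have hq : x %/ A <= x' %/ A by apply: leq_div2r; lia.
have hQ : y %/ B <= y' %/ B by apply: leq_div2r; lia.
move: (x %/ A) (x %% A) (divn_eq x A) (ltn_pmod x hA) hq e1 hx => q r ex hr hq e1 hx; subst x.
move: (x' %/ A) (x' %% A) (divn_eq x' A) (ltn_pmod x' hA) hq e2 hx => q' r' ex hr' hq e2 hx; subst x'.
move: (y %/ B) (y %% B) (divn_eq y B) (ltn_pmod y hB0) hQ e1 hy => Q R ey hR hQ e1 hy; subst y.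
move: (y' %/ B) (y' %% B) (divn_eq y' B) (ltn_pmod y' hB0) hQ e2 hy => Q' R' ey hR' hQ e2 hy; subst y'.
rewrite leq_eqVlt in hQ; case/orP: hQ => [/eqP eQ|hQ]; last exact: t3.
subst Q'.
rewrite ltn_add2l in hy.
rewrite leq_eqVlt in hq; case/orP: hq => [/eqP eq|hq].
  subst q'; rewrite ltn_add2l in hx; exact: t1.
have hd : k %| q' - q.
  by rewrite -eqn_mod_dvd ?(ltnW hq) // e1 e2.
have := dvdn_leq (_ : 0 < q' - q) hd.
move=> /(_ _) h; have {h} h : k <= q' - q by apply: h; lia.
apply: t2 => //; lia.
Qed.

Lemma fin_nat k A B n x0 xl y0 yl : 2 <= k -> 0 < A -> k*A <= B -> x0 <= xl -> y0 <= yl ->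
  xl %% A < A -> y0 %% B < B ->
  B*(xl+yl) + B*(k-1)*(xl%%A) + k*A*(y0%%B) + n*(k*A) >= B*(x0+y0) + n*((k+1)*B) + B*(k-1)*(x0%%A) + k*A*(yl%%B) ->
  n.+1*((k+1)*B) <= B*((xl - x0 + 1) + (yl - y0 + 1)) + n.+1*(k*A) + 2*B*(A+B).
Proof.
case: k => // k1 hk hA hB hx hy.
move: (xl %% A) (x0 %% A) (y0 %% B) (yl %% B) => r1 r0 R0 R1 hr hR.
rewrite subSS subn0 => H.
have h1 : B*(k1*(r1+1)) <= B*(k1*A) by rewrite leq_mul2l leq_mul2l addn1 hr !orbT.
have h2 : k1.+1*A*(R0+1) <= k1.+1*A*B by rewrite leq_mul2l addn1 hR orbT.
have h3 : B*(k1.+1*A) <= B*B by rewrite leq_mul2l hB orbT.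
have e1 : xl - x0 + 1 = (xl + 1) - x0 by lia.
have e2 : yl - y0 + 1 = (yl + 1) - y0 by lia.
have := subnKC hx; move: (xl - x0) => dx ex.
have := subnKC hy; move: (yl - y0) => dy ey. subst xl yl.
rewrite !(mulnDl, mulnDr, mulSn, mulnS, mulnA) in H h1 h2 h3 *.
lia.
Qed.

Lemma inv k A B : 2 <= k -> 0 < A -> k*A <= B -> forall xs ys x0 y0,
  sorted ltn (x0::xs) -> sorted ltn (y0::ys) -> size xs = size ys ->
  (forall i, i < (size xs).+1 -> fword k A (nth 0 (x0::xs) i) = fword k B (nth 0 (y0::ys) i)) ->
  B*(last x0 xs + last y0 ys) + B*(k-1)*(last x0 xs %% A) + k*A*(y0%%B) + size xs*(k*A)
   >= B*(x0+y0) + size xs*((k+1)*B) + B*(k-1)*(x0%%A) + k*A*(last y0 ys %% B).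
Proof.
move=> hk hA hB; elim=> [|x1 xs IH] [|y1 ys] x0 y0 //= sx sy hs hf.
  by rewrite !mul0n !addn0 leqnn.
case/andP: sx => h01 sx; case/andP: sy => h01' sy.
have := IH ys x1 y1 sx sy (succn_inj hs) (fun i hi => hf i.+1 hi).
have := @step k A B _ _ _ _ hk hA hB h01 h01' (hf 0 isT) (hf 1 isT).
rewrite mulSn.
move: (B*(k-1)) (k*A) ((k+1)*B) (x0 %% A) (x1 %% A) (y0 %% B) (y1 %% B) (last x1 xs) (last y1 ys) (last x1 xs %% A) (last y1 ys %% B) (size xs) => a b c u1 u2 u3 u4 l1 l2 l3 l4 n.
rewrite !mulnDr.
lia.
Qed.

Lemma path_last x xs : path ltn x xs -> x <= last x xs.
Proof. elim: xs x => //= a l IH x /andP[h p]; exact: leq_trans (ltnW h) (IH _ p). Qed.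

Local Open Scope ring_scope.

Theorem lemma3p3 (k A B : nat) (s1 s2 : seq nat) :
  (2 <= k)%N -> (0 < A)%N -> (0 < B)%N -> (k * A <= B)%N ->
  common_subseq k A B s1 s2 ->
  ((k + 1)%:R - (k * A)%:R / B%:R) * (size s1)%:R - 2%:R * (A + B)%:R
    <= (spanw s1 + spanw s2)%:R :> rat.
Proof.
move=> hk hA hB0 hB [sx sy hs hf].
case: s1 s2 sx sy hs hf => [|x0 xs] [|y0 ys] //= sx sy hs hf.

  rewrite mulr0 add0r -natrM; apply: (@le_trans _ _ 0); by rewrite ?oppr_le0 ler0n.
have hs' := succn_inj hs.
have H := @inv k A B hk hA hB xs ys x0 y0 sx sy hs' hf.
have hxl : (x0 <= last x0 xs)%N by exact: path_last.
have hyl : (y0 <= last y0 ys)%N by exact: path_last.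
have := @fin_nat k A B _ _ _ _ _ hk hA hB hxl hyl (ltn_pmod _ hA) (ltn_pmod _ hB0) H.
rewrite -(ler_nat rat) natrD natrD => key.
rewrite -(ler_pM2r (_ : 0 < B%:R :> rat)); last by rewrite ltr0n.
set n := (size xs).+1 in key *.
set sp := (last x0 xs - x0 + 1 + (last y0 ys - y0 + 1))%N in key *.
have hB' : B%:R != 0 :> rat by rewrite pnatr_eq0 -lt0n.
have -> : (((k + 1)%:R - (k * A)%:R / B%:R) * n%:R - 2%:R * (A + B)%:R)*B%:R
   = (n*((k+1)*B))%N%:R - (n*(k*A))%N%:R - (2*B*(A+B))%N%:R :> rat.
  by rewrite !natrM !natrD; field.
rewrite -natrM (mulnC sp).
move: key; move: (_ * (_ * _))%N%:R (B*sp)%N%:R (_ * (k * A))%N%:R (2*B*(A+B))%N%:R => *; lra.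
Qed.
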